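(* Let $n\ge 2$ be an integer and let $(x_0,y_0),\dots,(x_n,y_n)\in\mathbb{R}^2$ with $a:=x_0<x_1<\dots<x_n=:b$. For each $k\in\{1,\dots,n\}$ fix $d_k\in[0,1)$ and put \[ a_k=\frac{x_k-x_{k-1}}{x_n-x_0},\quad b_k=\frac{x_nx_{k-1}-x_0x_k}{x_n-x_0},\quad c_k=\frac{y_k-y_{k-1}}{x_n-x_0}-d_k\frac{y_n-y_0}{x_n-x_0},\quad e_k=\frac{x_ny_{k-1}-x_0y_k}{x_n-x_0}-d_k\frac{x_ny_0-x_0y_n}{x_n-x_0}, \] and $f_k(x,y)=(a_kx+b_k,\;c_kx+d_ky+e_k)$ for $(x,y)\in\mathbb{R}^2$. Let $\theta=1$ if $c_1=\dots=c_n=0$ and $\theta=\dfrac{1-\max_k a_k}{2\max_k|c_k|}$ otherwise. Let $f:[a,b]\to\mathbb{R}$ be the affine fractal interpolation function associated with these data, and $G_f=\{(x,f(x)):x\in[a,b]\}$ its graph. For $k\in\{1,\dots,n\}$ set \[ \gamma_k=\left(\frac{b_k}{1-a_k},\ \frac{b_kc_k}{(1-a_k)(1-d_k)}+\frac{e_k}{1-d_k}\right),\qquad s_k=\max\{a_k+\theta|c_k|,\,d_k\}, \] and \[ M=\max_{i,j\in\{1,\dots,n\}}\left\{\left|\frac{b_i}{1-a_i}-\frac{b_j}{1-a_j}\right|+\theta\left|\frac{c_ib_i}{(1-a_i)(1-d_i)}+\frac{e_i}{1-d_i}-\frac{c_jb_j}{(1-a_j)(1-d_j)}-\frac{e_j}{1-d_j}\right|\right\}.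 \] Let $\sigma$ be a permutation of $\{1,\dots,n\}$ with $s_{\sigma(1)}\le s_{\sigma(2)}\le\dots\le s_{\sigma(n)}$. Then \[ G_f\subseteq\left(\bigcup_{j=1}^{n-1}R\!\left[\gamma_{\sigma(j)},\,Ms_{\sigma(j)}\frac{1+s_{\sigma(n)}}{1-s_{\sigma(n-1)}s_{\sigma(n)}}\right]\right)\cup R\!\left[\gamma_{\sigma(n)},\,Ms_{\sigma(n)}\frac{1+s_{\sigma(n-1)}}{1-s_{\sigma(n-1)}s_{\sigma(n)}}\right]. \]
   Context: For $(x,y)\in\mathbb{R}^2$ and $r\ge0$, $R[(x,y),r]=\{(u,v)\in\mathbb{R}^2: |x-u|+\theta|y-v|\le r\}$ (the closed ball of radius $r$ for the metric $\rho((u_1,v_1),(u_2,v_2))=|u_1-u_2|+\theta|v_1-v_2|$; it is the filled rhombus with vertices $(x\pm r,y)$, $(x,y\pm r/\theta)$). The maps $f_k$ are contractions for $\rho$, and the attractor of the iterated function system $\{f_1,\dots,f_n\}$ is the unique nonempty compact set $K\subseteq\mathbb{R}^2$ with $K=\bigcup_{k=1}^n f_k(K)$. The affine fractal interpolation function is the continuous function $f:[a,b]\to\mathbb{R}$ with $f(x_k)=y_k$ for all $k\in\{0,\dots,n\}$ whose graph $G_f$ equals this attractor. Note $\gamma_k$ is the unique fixed point of $f_k$ and $s_k$ is the Lipschitz constant of $f_k$ with respect to $\rho$. *)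

(* Defs.v *)
From Stdlib Require Import Reals Lra Lia List ClassicalEpsilon.
Import ListNotations.
Open Scope R_scope.

(* maximum of g k over k = 1..n (n >= 1 intended) *)
Definition maxk (n : nat) (g : nat -> R) : R :=
  fold_right (fun k acc => Rmax (g k) acc) (g 1%nat) (seq 1 n).

Section FIF.
Variables (n : nat) (x y d : nat -> R).

Definition ak (k : nat) : R := (x k - x (k-1)%nat) / (x n - x 0%nat).
Definition bk (k : nat) : R := (x n * x (k-1)%nat - x 0%nat * x k) / (x n - x 0%nat).
Definition ck (k : nat) : R :=
  (y k - y (k-1)%nat) / (x n - x 0%nat) - d k * ((y n - y 0%nat) / (x n - x 0%nat)).
Definition ek (k : nat) : R :=
  (x n * y (k-1)%nat - x 0%nat * y k) / (x n - x 0%nat)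
  - d k * ((x n * y 0%nat - x 0%nat * y n) / (x n - x 0%nat)).

Definition fk (k : nat) (p : R * R) : R * R :=
  (ak k * fst p + bk k, ck k * fst p + d k * snd p + ek k).

Definition theta : R :=
  if excluded_middle_informative (forall k, (1 <= k <= n)%nat -> ck k = 0)
  then 1
  else (1 - maxk n ak) / (2 * maxk n (fun k => Rabs (ck k))).

(* fixed point gamma_k of f_k *)
Definition gamma (k : nat) : R * R :=
  (bk k / (1 - ak k),
   bk k * ck k / ((1 - ak k) * (1 - d k)) + ek k / (1 - d k)).

Definition sk (k : nat) : R := Rmax (ak k + theta * Rabs (ck k)) (d k).

Definition Mconst : R :=
  maxk n (fun i => maxk n (fun j =>
    Rabs (bk i / (1 - ak i) - bk j / (1 - ak j))
    + theta * Rabs (ck i * bk i / ((1 - ak i) * (1 - d i)) + ek i / (1 - d i)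
                    - ck j * bk j / ((1 - ak j) * (1 - d j)) - ek j / (1 - d j)))).

Definition Rball (c : R * R) (r : R) (p : R * R) : Prop :=
  Rabs (fst p - fst c) + theta * Rabs (snd p - snd c) <= r.

(* f is the affine fractal interpolation function of the data:
   continuous on [x_0, x_n], interpolates, and its graph is invariant
   under the IFS {f_1,...,f_n} (hence is its attractor). *)
Definition graph (f : R -> R) (p : R * R) : Prop :=
  x 0%nat <= fst p <= x n /\ snd p = f (fst p).

Definition is_affine_FIF (f : R -> R) : Prop :=
  (forall t, x 0%nat <= t <= x n ->
     limit1_in f (fun u => x 0%nat <= u <= x n) (f t) t) /\
  (forall k, (k <= n)%nat -> f (x k) = y k) /\
  (forall p, graph f p <->
     exists k, (1 <= k <= n)%nat /\ exists q, graph f q /\ p = fk k q).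

End FIF.

(* Main.v *)
Require Import Defs.
From Stdlib Require Import Reals Lra Lia List ClassicalEpsilon Classical.
Import ListNotations.
Open Scope R_scope.

Lemma fold_ge (g : nat -> R) k : forall l b, In k l ->
  g k <= fold_right (fun k acc => Rmax (g k) acc) b l.
Proof.
  induction l as [|a l IH]; simpl; intros b H; [contradiction|].
  destruct H as [<-|H]; [apply Rmax_l|].
  eapply Rle_trans; [apply IH; exact H| apply Rmax_r].
Qed.

Lemma maxk_ge n g k : (1 <= k <= n)%nat -> g k <= maxk n g.
Proof.
  intros Hk; unfold maxk; apply fold_ge; apply in_seq; lia.
Qed.

Lemma maxk_lt n g c : (1 <= n)%nat -> (forall k, (1 <= k <= n)%nat -> g k < c) ->
  maxk n g < c.
Proof.
  intros Hn H; unfold maxk.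
  assert (Hl : forall l, (forall k, In k l -> g k < c) -> g 1%nat < c ->
     fold_right (fun k acc => Rmax (g k) acc) (g 1%nat) l < c).
  { induction l as [|a l IH]; simpl; intros Hin H1; auto.
    apply Rmax_lub_lt; auto. }
  apply Hl. intros k Hk; apply in_seq in Hk; apply H; lia. apply H; lia.
Qed.

Lemma sigma_surj n (sigma : nat -> nat) :
  (forall i, (1 <= i <= n)%nat -> (1 <= sigma i <= n)%nat) ->
  (forall i j, (1 <= i <= n)%nat -> (1 <= j <= n)%nat -> sigma i = sigma j -> i = j) ->
  forall j, (1 <= j <= n)%nat -> exists i, (1 <= i <= n)%nat /\ sigma i = j.
Proof.
  intros Hr Hi j Hj.
  assert (Hnd : NoDup (map sigma (seq 1 n))).
  { apply NoDup_map_NoDup_ForallPairs; [|apply seq_NoDup].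
    intros a b Ha Hb; apply in_seq in Ha; apply in_seq in Hb; apply Hi; lia. }
  assert (Hinc : incl (seq 1 n) (map sigma (seq 1 n))).
  { apply NoDup_length_incl; auto.
    rewrite length_map; lia.
    intros z Hz; apply in_map_iff in Hz; destruct Hz as [i [<- Hi']].
    apply in_seq in Hi'; apply in_seq; specialize (Hr i); lia. }
  assert (In j (map sigma (seq 1 n))) by (apply Hinc; apply in_seq; lia).
  apply in_map_iff in H; destruct H as [i [Hs Hin]]; apply in_seq in Hin.
  exists i; split; [lia|auto].
Qed.

Definition clamp a b u := Rmax a (Rmin u b).

Lemma clamp_in a b u : a <= b -> a <= clamp a b u <= b.
Proof. intros; unfold clamp, Rmax, Rmin; repeat destruct Rle_dec; lra. Qed.

Lemma clamp_id a b u : a <= u <= b -> clamp a b u = u.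
Proof. intros; unfold clamp, Rmax, Rmin; repeat destruct Rle_dec; lra. Qed.

Lemma clamp_lip a b u v : a <= b -> Rabs (clamp a b u - clamp a b v) <= Rabs (u - v).
Proof.
  intros; unfold clamp, Rmax, Rmin; repeat destruct Rle_dec;
  unfold Rabs; repeat destruct Rcase_abs; lra.
Qed.

Lemma bounded_f a b (f : R -> R) : a <= b ->
  (forall t, a <= t <= b -> limit1_in f (fun u => a <= u <= b) (f t) t) ->
  exists F, 0 <= F /\ forall t, a <= t <= b -> Rabs (f t) <= F.
Proof.
  intros Hab Hc.
  set (g := fun u => f (clamp a b u)).
  assert (Hg : forall c, a <= c <= b -> continuity_pt g c).
  { intros c _ eps Heps.
    destruct (Hc (clamp a b c) (clamp_in a b c Hab) eps Heps) as [alp [Ha H]].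
    exists alp; split; auto.
    intros u [_ Hu]. unfold g. apply H. split. apply clamp_in; auto.
    simpl in *; unfold R_dist in *. eapply Rle_lt_trans; [apply clamp_lip; auto|]. exact Hu. }
  destruct (continuity_ab_maj g a b Hab Hg) as [m1 [H1 _]].
  destruct (continuity_ab_min g a b Hab Hg) as [m2 [H2 _]].
  exists (Rabs (g m1) + Rabs (g m2)). split.
  apply Rplus_le_le_0_compat; apply Rabs_pos.
  intros t Ht. specialize (H1 t Ht); specialize (H2 t Ht).
  assert (Eg : g t = f t) by (unfold g; rewrite clamp_id; auto). rewrite Eg in H1, H2.
  revert H1 H2. generalize (f t) (g m1) (g m2); intros.
  unfold Rabs; repeat destruct Rcase_abs; lra.
Qed.

Lemma x_mono n (x : nat -> R) : (forall k, (k < n)%nat -> x k < x (S k)) ->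
  forall i j, (i < j <= n)%nat -> x i < x j.
Proof.
  intros H i j; induction j as [|j IH]; intros Hij; [lia|].
  destruct (Nat.eq_dec i j) as [->|Hne]. apply H; lia.
  apply Rlt_trans with (x j). apply IH; lia. apply H; lia.
Qed.

Lemma ak_bounds n x : (2 <= n)%nat -> (forall k, (k < n)%nat -> x k < x (S k)) ->
  forall k, (1 <= k <= n)%nat -> 0 < ak n x k < 1.
Proof.
  intros Hn H k Hk. unfold ak.
  assert (H1 : x (k-1)%nat < x k) by (apply x_mono with n; auto; lia).
  assert (H2 : x (k-1)%nat - x 0%nat + (x n - x k) > 0).
  { destruct (Nat.eq_dec k 1) as [->|Hk1].
    - simpl. assert (x 1%nat < x n) by (apply x_mono with n; auto; lia). lra.
    - assert (x 0%nat < x (k-1)%nat) by (apply x_mono with n; auto; lia).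
      destruct (Nat.eq_dec k n) as [->|Hkn]. lra.
      assert (x k < x n) by (apply x_mono with n; auto; lia). lra. }
  assert (H3 : x 0%nat <= x (k-1)%nat).
  { destruct (Nat.eq_dec k 1) as [->|]; [simpl; lra|]. left; apply x_mono with n; auto; lia. }
  assert (H4 : x k <= x n).
  { destruct (Nat.eq_dec k n) as [->|]; [lra|]. left; apply x_mono with n; auto; lia. }
  split. apply Rdiv_lt_0_compat; lra.
  apply Rmult_lt_reg_r with (x n - x 0%nat). lra.
  unfold Rdiv; rewrite Rmult_assoc, Rinv_l by lra. lra.
Qed.

Lemma theta_facts n x y d : (2 <= n)%nat -> (forall k, (k < n)%nat -> x k < x (S k)) ->
  0 <= theta n x y d /\
  forall k, (1 <= k <= n)%nat -> ak n x k + theta n x y d * Rabs (ck n x y d k) < 1.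
Proof.
  intros Hn H. pose proof (ak_bounds n x Hn H) as Ha.
  assert (Hma : maxk n (ak n x) < 1) by (apply maxk_lt; [lia|]; intros; apply Ha; auto).
  unfold theta. destruct excluded_middle_informative as [Hc|Hc].
  - split; [lra|]. intros k Hk. rewrite Hc by auto. rewrite Rabs_R0. pose proof (Ha k Hk). lra.
  - assert (Hex : exists k, (1 <= k <= n)%nat /\ ck n x y d k <> 0).
    { apply Classical_Prop.NNPP; intro Hne; apply Hc; intros k Hk.
      apply Classical_Prop.NNPP; intro; apply Hne; eauto. }
    destruct Hex as [k0 [Hk0 Hck0]].
    set (mc := maxk n (fun k => Rabs (ck n x y d k))).
    assert (Hmc : Rabs (ck n x y d k0) <= mc) by (apply (maxk_ge n (fun k => Rabs (ck n x y d k))); auto).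
    assert (Hpos : 0 < mc) by (pose proof (Rabs_pos_lt _ Hck0); lra).
    split. apply Rle_mult_inv_pos; lra.
    intros k Hk.
    assert (Hk' : Rabs (ck n x y d k) <= mc) by (apply (maxk_ge n (fun k => Rabs (ck n x y d k))); auto).
    assert (Hak : ak n x k <= maxk n (ak n x)) by (apply maxk_ge; auto).
    assert (E : (1 - maxk n (ak n x)) / (2 * mc) * Rabs (ck n x y d k)
               <= (1 - maxk n (ak n x)) / 2).
    { unfold Rdiv. rewrite Rinv_mult. 
      replace ((1 - maxk n (ak n x)) * (/ 2 * / mc) * Rabs (ck n x y d k))
        with ((1 - maxk n (ak n x)) * / 2 * (Rabs (ck n x y d k) / mc)) by (unfold Rdiv; ring).
      rewrite <- (Rmult_1_r ((1 - maxk n (ak n x)) * / 2)) at 2.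
      apply Rmult_le_compat_l. lra.
      apply Rmult_le_reg_r with mc; auto. unfold Rdiv; rewrite Rmult_assoc, Rinv_l by lra. lra. }
    lra.
Qed.

Definition rho n x y d (p q : R * R) :=
  Rabs (fst p - fst q) + theta n x y d * Rabs (snd p - snd q).

Lemma rho_triang n x y d p q r : 0 <= theta n x y d ->
  rho n x y d p r <= rho n x y d p q + rho n x y d q r.
Proof.
  intros Ht; unfold rho.
  pose proof (Rabs_triang (fst p - fst q) (fst q - fst r)).
  pose proof (Rabs_triang (snd p - snd q) (snd q - snd r)).
  replace (fst p - fst q + (fst q - fst r)) with (fst p - fst r) in H by ring.
  replace (snd p - snd q + (snd q - snd r)) with (snd p - snd r) in H0 by ring.
  pose proof (Rmult_le_compat_l _ _ _ Ht H0). lra.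
Qed.

Lemma rho_sym n x y d p q : rho n x y d p q = rho n x y d q p.
Proof. unfold rho; rewrite (Rabs_minus_sym (fst p)), (Rabs_minus_sym (snd p)); auto. Qed.

Lemma rho_refl n x y d p : rho n x y d p p = 0.
Proof. unfold rho; rewrite !Rminus_diag, Rabs_R0; ring. Qed.

Lemma contract n x y d k p q : 0 <= ak n x k -> 0 <= theta n x y d -> 0 <= d k ->
  rho n x y d (fk n x y d k p) (fk n x y d k q) <= sk n x y d k * rho n x y d p q.
Proof.
  intros Ha Ht Hd. unfold rho, fk, sk; simpl.
  set (a := ak n x k) in *. set (c := ck n x y d k). set (t := theta n x y d) in *.
  set (S := Rmax (a + t * Rabs c) (d k)).
  assert (S1 : a + t * Rabs c <= S) by apply Rmax_l.
  assert (S2 : d k <= S) by apply Rmax_r.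
  replace (a * fst p + bk n x k - (a * fst q + bk n x k)) with (a * (fst p - fst q)) by ring.
  replace (c * fst p + d k * snd p + ek n x y d k - (c * fst q + d k * snd q + ek n x y d k))
    with (c * (fst p - fst q) + d k * (snd p - snd q)) by ring.
  pose proof (Rabs_triang (c * (fst p - fst q)) (d k * (snd p - snd q))).
  rewrite !Rabs_mult in *. rewrite (Rabs_right a), (Rabs_right (d k)) in * by lra.
  set (u := Rabs (fst p - fst q)) in *. set (v := Rabs (snd p - snd q)) in *.
  assert (0 <= u) by apply Rabs_pos. assert (0 <= v) by apply Rabs_pos.
  assert (0 <= Rabs c) by apply Rabs_pos.
  pose proof (Rmult_le_compat_l _ _ _ Ht H).
  assert ((a + t * Rabs c) * u <= S * u) by (apply Rmult_le_compat_r; lra).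
  assert (d k * (t * v) <= S * (t * v)) by (apply Rmult_le_compat_r; nra).
  nra.
Qed.

Lemma gamma_fix n x y d k : ak n x k <> 1 -> d k <> 1 ->
  fk n x y d k (gamma n x y d k) = gamma n x y d k.
Proof.
  intros Ha Hd. unfold fk, gamma; simpl. f_equal; field; lra.
Qed.

Theorem theorem3p1 (n : nat) (x y d : nat -> R) (f : R -> R) (sigma : nat -> nat) :
  (2 <= n)%nat ->
  (forall k, (k < n)%nat -> x k < x (S k)) ->
  (forall k, (1 <= k <= n)%nat -> 0 <= d k < 1) ->
  is_affine_FIF n x y d f ->
  (forall i, (1 <= i <= n)%nat -> (1 <= sigma i <= n)%nat) ->
  (forall i j, (1 <= i <= n)%nat -> (1 <= j <= n)%nat -> sigma i = sigma j -> i = j) ->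
  (forall i j, (1 <= i <= j)%nat -> (j <= n)%nat ->
     sk n x y d (sigma i) <= sk n x y d (sigma j)) ->
  let s := sk n x y d in
  let M := Mconst n x y d in
  let sn := s (sigma n) in
  let sn1 := s (sigma (n - 1)%nat) in
  forall p, graph n x f p ->
    (exists j, (1 <= j <= n - 1)%nat /\
       Rball n x y d (gamma n x y d (sigma j)) (M * s (sigma j) * ((1 + sn) / (1 - sn1 * sn))) p)
    \/ Rball n x y d (gamma n x y d (sigma n)) (M * sn * ((1 + sn1) / (1 - sn1 * sn))) p.
Proof.
  intros Hn Hx Hd HF Hsr Hsi Hsm s M sn sn1 p Hp.
  destruct HF as [Hcont [_ Hinv]].
  destruct (theta_facts n x y d Hn Hx) as [Ht Htk].
  pose proof (ak_bounds n x Hn Hx) as Ha.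
  set (th := theta n x y d) in *.
  assert (Hs01 : forall k, (1 <= k <= n)%nat -> 0 <= s k < 1).
  { intros k Hk; unfold s, sk; fold th; split.
    - eapply Rle_trans; [|apply Rmax_r]. apply Hd; auto.
    - apply Rmax_lub_lt. apply Htk; auto. apply Hd; auto. }
  pose proof (sigma_surj n sigma Hsr Hsi) as Hsurj.
  assert (Hsle : forall j, (1 <= j <= n)%nat -> s j <= sn).
  { intros j Hj; destruct (Hsurj j Hj) as [i [Hi <-]]. apply Hsm; lia. }
  assert (Hsle1 : forall j, (1 <= j <= n)%nat -> j <> sigma n -> s j <= sn1).
  { intros j Hj Hne; destruct (Hsurj j Hj) as [i [Hi <-]].
    assert (i <> n) by (intro; subst; auto). apply Hsm; lia. }
  assert (Hsn : 0 <= sn < 1) by (apply Hs01, Hsr; lia).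
  assert (Hsn1 : 0 <= sn1 <= sn).
  { split. apply Hs01, Hsr; lia. apply Hsm; lia. }
  assert (HM : forall i j, (1 <= i <= n)%nat -> (1 <= j <= n)%nat ->
            rho n x y d (gamma n x y d i) (gamma n x y d j) <= M).
  { intros i j Hi Hj.
    eapply Rle_trans; [|apply (maxk_ge n _ i Hi)].
    eapply Rle_trans; [|apply (maxk_ge n _ j Hj)].
    unfold rho, gamma; simpl; fold th. right.
    apply f_equal2; [reflexivity|]. apply f_equal2; [reflexivity|]. apply f_equal. clear -i. generalize (ck n x y d i) (bk n x i) (ck n x y d j) (bk n x j); intros; unfold Rdiv; ring. }
  assert (HM0 : 0 <= M).
  { eapply Rle_trans; [|apply (HM 1%nat 1%nat); lia]. rewrite rho_refl; lra. }
  assert (Hden : 0 < 1 - sn1 * sn) by nra.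
  set (A := M * ((1 + sn1) / (1 - sn1 * sn))).
  set (B := M * ((1 + sn) / (1 - sn1 * sn))).
  assert (HA0 : 0 <= A).
  { unfold A; apply Rmult_le_pos; auto. apply Rle_mult_inv_pos; lra. }
  assert (HB0 : 0 <= B).
  { unfold B; apply Rmult_le_pos; auto. apply Rle_mult_inv_pos; lra. }
  assert (EA : M + sn1 * B = A) by (unfold A, B; field; lra).
  assert (EB : M + sn * A = B) by (unfold A, B; field; lra).
  assert (HBA : sn1 * B <= sn * A).
  { unfold A, B. unfold Rdiv.
    replace (sn * (M * ((1 + sn1) * / (1 - sn1 * sn))))
      with (sn1 * (M * ((1 + sn) * / (1 - sn1 * sn))) + M * (sn - sn1) * / (1 - sn1 * sn)) by ring.
    assert (0 <= M * (sn - sn1) * / (1 - sn1 * sn)).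
    { apply Rmult_le_pos. apply Rmult_le_pos; lra. left; apply Rinv_0_lt_compat; lra. }
    lra. }
  set (bnd := fun i => if Nat.eq_dec i (sigma n) then A else B).
  assert (Hbnd0 : forall i, 0 <= bnd i) by (intro i; unfold bnd; destruct Nat.eq_dec; lra).
  assert (Hx0n : x 0%nat <= x n) by (left; apply x_mono with n; auto; lia).
  destruct (bounded_f (x 0%nat) (x n) f Hx0n Hcont) as [F [HF0 HFb]].
  set (G := maxk n (fun i => Rabs (fst (gamma n x y d i)) + th * Rabs (snd (gamma n x y d i)))).
  set (t0 := Rabs (x 0%nat) + Rabs (x n) + th * F + G).
  assert (Hbase : forall q, graph n x f q -> forall i, (1 <= i <= n)%nat ->
             rho n x y d q (gamma n x y d i) <= t0).
  { intros q [Hq1 Hq2] i Hi. unfold rho; fold th.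
    pose proof (maxk_ge n (fun i => Rabs (fst (gamma n x y d i)) + th * Rabs (snd (gamma n x y d i))) i Hi) as HG.
    fold G in HG; cbv beta in HG.
    pose proof (Rabs_triang (fst q) (- fst (gamma n x y d i))).
    pose proof (Rabs_triang (snd q) (- snd (gamma n x y d i))).
    rewrite Rabs_Ropp in *.
    assert (Rabs (fst q) <= Rabs (x 0%nat) + Rabs (x n)).
    { revert Hq1; unfold Rabs; repeat destruct Rcase_abs; lra. }
    assert (Rabs (snd q) <= F) by (rewrite Hq2; apply HFb; auto).
    assert (th * Rabs (snd q - snd (gamma n x y d i)) <=
            th * Rabs (snd q) + th * Rabs (snd (gamma n x y d i))) by (rewrite <- Rmult_plus_distr_l; apply Rmult_le_compat_l; auto; unfold Rminus; rewrite <- (Rabs_Ropp (snd (gamma _ _ _ _ i))); apply Rabs_triang).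
    assert (th * Rabs (snd q) <= th * F) by (apply Rmult_le_compat_l; auto).
    unfold t0. unfold Rminus in *. lra. }
  assert (Ht0 : 0 <= t0).
  { pose proof (maxk_ge n (fun i => Rabs (fst (gamma n x y d i)) + th * Rabs (snd (gamma n x y d i))) 1%nat ltac:(lia)) as HG.
    fold G in HG; cbv beta in HG.
    pose proof (Rabs_pos (fst (gamma n x y d 1%nat))). pose proof (Rabs_pos (snd (gamma n x y d 1%nat))).
    assert (0 <= th * Rabs (snd (gamma n x y d 1%nat))) by (apply Rmult_le_pos; auto).
    assert (0 <= th * F) by (apply Rmult_le_pos; auto).
    pose proof (Rabs_pos (x 0%nat)). pose proof (Rabs_pos (x n)). unfold t0. lra. }
  assert (Hind : forall m q, graph n x f q -> forall i, (1 <= i <= n)%nat ->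
             rho n x y d q (gamma n x y d i) <= bnd i + sn ^ m * t0).
  { induction m as [|m IH]; intros q Hq i Hi.
    - simpl. pose proof (Hbase q Hq i Hi). pose proof (Hbnd0 i). lra.
    - destruct (proj1 (Hinv q) Hq) as [j [Hj [q' [Hq' ->]]]].
      pose proof (IH q' Hq' j Hj) as IHj.
      pose proof (Ha j Hj). pose proof (Hd j Hj). pose proof (Hs01 j Hj).
      pose proof (Hsle j Hj).
      assert (Hc : rho n x y d (fk n x y d j q') (gamma n x y d j)
                   <= s j * rho n x y d q' (gamma n x y d j)).
      { rewrite <- (gamma_fix n x y d j) at 1 by lra. apply contract; [lra|exact Ht|lra]. }
      assert (Hc2 : s j * rho n x y d q' (gamma n x y d j) <= s j * (bnd j + sn ^ m * t0))
        by (apply Rmult_le_compat_l; lra).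
      assert (Hpow : s j * (sn ^ m * t0) <= sn ^ S m * t0).
      { simpl. rewrite Rmult_assoc. apply Rmult_le_compat_r; [|lra].
        apply Rmult_le_pos; auto; apply pow_le; lra. }
      pose proof (rho_triang n x y d (fk n x y d j q') (gamma n x y d j) (gamma n x y d i) Ht).
      destruct (Nat.eq_dec i j) as [->|Hij].
      + rewrite rho_refl in H3.
        assert (s j * bnd j <= bnd j) by (pose proof (Hbnd0 j); nra). nra.
      + pose proof (HM j i Hj Hi).
        assert (Hkey : s j * bnd j + M <= bnd i).
        { unfold bnd. destruct (Nat.eq_dec j (sigma n)) as [Ej|Ej];
          destruct (Nat.eq_dec i (sigma n)) as [Ei|Ei].
          - exfalso; apply Hij; congruence.
          - rewrite Ej. fold sn. lra.
          - pose proof (Hsle1 j Hj Ej). assert (s j * B <= sn1 * B) by nra. lra.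
          - pose proof (Hsle1 j Hj Ej). assert (s j * B <= sn1 * B) by nra. lra. }
        nra. }
  assert (Hlim : forall q, graph n x f q -> forall i, (1 <= i <= n)%nat ->
             rho n x y d q (gamma n x y d i) <= bnd i).
  { intros q Hq i Hi. apply Rnot_lt_le; intro Hlt.
    set (eps := rho n x y d q (gamma n x y d i) - bnd i).
    assert (Heps : 0 < eps / (t0 + 1)) by (apply Rdiv_lt_0_compat; unfold eps; lra).
    destruct (pow_lt_1_zero sn ltac:(rewrite Rabs_right; lra) _ Heps) as [N HN].
    specialize (HN N (le_n N)). rewrite Rabs_right in HN by (apply Rle_ge, pow_le; lra).
    pose proof (Hind N q Hq i Hi).
    assert (sn ^ N * (t0 + 1) < eps).
    { apply Rmult_lt_reg_r with (/ (t0 + 1)). apply Rinv_0_lt_compat; lra.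
      rewrite Rmult_assoc, Rinv_r by lra. unfold Rdiv in HN. lra. }
    assert (0 <= sn ^ N) by (apply pow_le; lra).
    unfold eps in *. nra. }
  destruct (proj1 (Hinv p) Hp) as [k [Hk [q [Hq ->]]]].
  destruct (Hsurj k Hk) as [i [Hi <-]].
  pose proof (Ha (sigma i) Hk). pose proof (Hd (sigma i) Hk).
  assert (Hc : rho n x y d (fk n x y d (sigma i) q) (gamma n x y d (sigma i))
               <= s (sigma i) * rho n x y d q (gamma n x y d (sigma i))).
  { rewrite <- (gamma_fix n x y d (sigma i)) at 1 by lra. apply contract; [lra|exact Ht|lra]. }
  pose proof (Hlim q Hq (sigma i) Hk) as Hl.
  pose proof (Hs01 (sigma i) Hk).
  assert (Hc2 : s (sigma i) * rho n x y d q (gamma n x y d (sigma i)) <= s (sigma i) * bnd (sigma i))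
    by (apply Rmult_le_compat_l; lra).
  unfold Rball.
  destruct (Nat.eq_dec i n) as [->|Hin].
  - right. unfold bnd in Hc2; destruct Nat.eq_dec; [|congruence].
    change (rho n x y d (fk n x y d (sigma n) q) (gamma n x y d (sigma n)) <= M * sn * ((1 + sn1) / (1 - sn1 * sn))).
    replace (M * sn * ((1 + sn1) / (1 - sn1 * sn))) with (s (sigma n) * A) by (unfold A, sn; unfold Rdiv; ring).
    lra.
  - left. exists i. split; [lia|].
    unfold bnd in Hc2; destruct Nat.eq_dec as [E|_]; [exfalso; apply Hin; apply Hsi; auto; lia|].
    change (rho n x y d (fk n x y d (sigma i) q) (gamma n x y d (sigma i)) <= M * s (sigma i) * ((1 + sn) / (1 - sn1 * sn))).
    replace (M * s (sigma i) * ((1 + sn) / (1 - sn1 * sn))) with (s (sigma i) * B) by (unfold B; unfold Rdiv; ring).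
    lra.
Qed.
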